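(* Every representation of the relation algebra $31_{65}$ has at least $15$ vertices.
   Context: A cycle type is the multiset of colors of the sides of a triangle, e.g. $caa$ = one side $c$, two sides $a$. $31_{65}$ is the finite symmetric integral relation algebra with atoms $1',a,b,c$ whose mandatory diversity cycle types are exactly $aaa, bbb, ccc, abb, baa, caa, abc$ (so $acc, bcc, cbb$ are forbidden). A representation on a set $X$ (its vertices) is a coloring of all 2-element subsets of $X$ by $a,b,c$, each color used, such that: for every mandatory type $\{h,i,j\}$, every edge $\{x,y\}$ colored $h$ (for each choice of $h$ among the type's colors) and each ordering $(i,j)$ of the remaining two colors, some $z$ has $\{x,z\}$ colored $i$, $\{z,y\}$ colored $j$; and no triangle of a forbidden type occurs. *)

(* Defs.v *)
From Stdlib Require Import List.

Inductive Color : Type := ca | cb | cc.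

(* The multiset {h,i,j} equals the multiset {p,q,r}. *)
Definition is_type (h i j p q r : Color) : Prop :=
  (h = p /\ i = q /\ j = r) \/ (h = p /\ i = r /\ j = q) \/
  (h = q /\ i = p /\ j = r) \/ (h = q /\ i = r /\ j = p) \/
  (h = r /\ i = p /\ j = q) \/ (h = r /\ i = q /\ j = p).

Definition mandatory_type (h i j : Color) : Prop :=
  is_type h i j ca ca ca \/ is_type h i j cb cb cb \/ is_type h i j cc cc cc \/
  is_type h i j ca cb cb \/ is_type h i j cb ca ca \/ is_type h i j cc ca ca \/
  is_type h i j ca cb cc.

Definition forbidden_type (h i j : Color) : Prop :=
  is_type h i j ca cc cc \/ is_type h i j cb cc cc \/ is_type h i j cc cb cb.

(* A representation of 31_65 on vertex set X: col x y is the colour of the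
   2-element subset {x,y} (values on the diagonal are irrelevant). *)
Definition representation_31_65 (X : Type) (col : X -> X -> Color) : Prop :=
  (forall x y : X, x <> y -> col x y = col y x) /\
  (forall k : Color, exists x y : X, x <> y /\ col x y = k) /\
  (forall (x y : X) (i j : Color), x <> y -> mandatory_type (col x y) i j ->
     exists z : X, z <> x /\ z <> y /\ col x z = i /\ col z y = j) /\
  (forall x y z : X, x <> y -> y <> z -> x <> z ->
     ~ forbidden_type (col x y) (col y z) (col x z)).

(* Main.v *)
Require Import Defs.
From Stdlib Require Import List.
Import ListNotations.

Ltac disj := first [ solve [repeat split] | left; disj | right; disj ].
Ltac mt := unfold mandatory_type, is_type; disj.
Ltac ft := unfold forbidden_type, is_type; disj.

Section S.
Variable X : Type.
Variable col : X -> X -> Color.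
Hypothesis H : representation_31_65 X col.

Lemma sym x y : x <> y -> col x y = col y x.
Proof. destruct H as [H1 _]; auto. Qed.

Lemma mand x y i j : x <> y -> mandatory_type (col x y) i j ->
  exists z, z <> x /\ z <> y /\ col x z = i /\ col z y = j.
Proof. destruct H as [_ [_ [H3 _]]]; auto. Qed.

Lemma forb x y z : x <> y -> y <> z -> x <> z ->
  ~ forbidden_type (col x y) (col y z) (col x z).
Proof. destruct H as [_ [_ [_ H4]]]; auto. Qed.

Lemma ctrans x y z : x <> y -> y <> z -> x <> z -> col x y = cc -> col y z = cc ->
  col x z = cc.
Proof.
  intros n1 n2 n3 e1 e2. pose proof (forb x y z n1 n2 n3) as F.
  rewrite e1, e2 in F. destruct (col x z); auto; exfalso; apply F; ft.
Qed.

Lemma bbc x p q : x <> p -> x <> q -> p <> q -> col x p = cb -> col x q = cb ->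
  col p q <> cc.
Proof.
  intros n1 n2 n3 e1 e2 e3. apply (forb x p q n1 n3 n2).
  rewrite e1, e2, e3. ft.
Qed.

Definition inR r u := u = r \/ (u <> r /\ col r u = cc).

Lemma sep r s u : r <> s -> col r s <> cc -> inR r u -> inR s u -> False.
Proof.
  intros n nc [e1|[n1 c1]] [e2|[n2 c2]].
  - congruence.
  - subst u. apply nc. rewrite sym; auto.
  - subst u. auto.
  - apply nc. apply (ctrans r u s); auto. rewrite sym; auto.
Qed.

Lemma cls r s : r <> s -> col r s = cb ->
  exists r1 r2, r1 <> r /\ r2 <> r /\ r2 <> r1 /\ col r r1 = cc /\ col r r2 = cc.
Proof.
  intros n e.
  destruct (mand r s cc ca n) as [z [z1 [z2 [z3 z4]]]]. { rewrite e; mt. }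
  destruct (mand r z cc cc (not_eq_sym z1)) as [w [w1 [w2 [w3 w4]]]]. { rewrite z3; mt. }
  exists z, w; auto.
Qed.

Lemma four : exists o p1 p2 p3 p4,
  o <> p1 /\ o <> p2 /\ o <> p3 /\ o <> p4 /\
  col o p1 = cb /\ col o p2 = cb /\ col o p3 = cb /\ col o p4 = cb /\
  p1 <> p2 /\ p1 <> p3 /\ p1 <> p4 /\ p2 <> p3 /\ p2 <> p4 /\ p3 <> p4.
Proof.
  destruct H as [_ [H2 _]].
  destruct (H2 cb) as [x [y1 [n e]]].
  destruct (mand x y1 cb cb n) as [y2 [a1 [a2 [a3 a4]]]]. { rewrite e; mt. }
  destruct (mand x y1 cb ca n) as [y3 [b1 [b2 [b3 b4]]]]. { rewrite e; mt. }
  assert (n23 : y2 <> y3) by congruence.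
  destruct (col y2 y3) eqn:E23.
  -
    destruct (mand x y3 cb cb (not_eq_sym b1)) as [y4 [c1 [c2 [c3 c4]]]]. { rewrite b3; mt. }
    exists x, y1, y2, y3, y4.
    assert (y4 <> y1). { intro h; subst y4. rewrite sym in b4 by auto. congruence. }
    assert (y4 <> y2). { intro h; subst y4. congruence. }
    repeat split; auto; congruence.
  -
    assert (n13 : y1 <> y3) by auto.
    assert (e13 : col y1 y3 = ca) by (rewrite sym; auto).
    destruct (mand y1 y3 cb cc n13) as [w [w1 [w2 [w3 w4]]]]. { rewrite e13; mt. }
    assert (wx : w <> x) by congruence.
    assert (wy2 : w <> y2) by congruence.
    destruct (mand y1 w cb cb (not_eq_sym w1)) as [v [v1 [v2 [v3 v4]]]]. { rewrite w3; mt. }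
    assert (vx : v <> x).
    { intro h; subst v. apply (bbc x w y3); auto; rewrite sym; auto. }
    assert (vy2 : v <> y2).
    { intro h; subst v. apply (bbc y2 w y3); auto; rewrite sym; auto. }
    exists y1, x, y2, w, v.
    repeat split; auto.
    + rewrite sym; auto.
    + rewrite sym; auto.
  - exfalso. apply (bbc x y2 y3); auto.
Qed.

End S.

Ltac neq_case E :=
  first [ congruence
        | subst; match goal with
                 | H1 : inR _ _ ?r ?u, H2 : inR _ _ ?s ?u |- _ =>
                     solve [eapply (sep _ _ ltac:(eassumption) r s u); eassumption]
                 end ].

Ltac nd := match goal with
 | |- NoDup nil => constructor
 | |- NoDup (_ :: _) => constructor;
     [ let Hin := fresh in intro Hin; simpl in Hin;
       repeat (destruct Hin as [Hin|Hin]; [ neq_case Hin | ]); exact Hin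
     | nd ]
 end.

Theorem mainTheorem10 (X : Type) (col : X -> X -> Color) :
  representation_31_65 X col ->
  exists l : list X, length l = 15 /\ NoDup l.
Proof.
  intro H.
  destruct (four X col H) as [o [p1 [p2 [p3 [p4 [n1 [n2 [n3 [n4 [e1 [e2 [e3 [e4
    [d12 [d13 [d14 [d23 [d24 d34]]]]]]]]]]]]]]]]]].
  destruct (cls X col H o p1 n1 e1) as [o1 [o2 [f1 [f2 [f3 [f4 f5]]]]]].
  assert (q1 : p1 <> o) by auto.
  assert (q2 : p2 <> o) by auto.
  assert (q3 : p3 <> o) by auto.
  assert (q4 : p4 <> o) by auto.
  destruct (cls X col H p1 o q1 ltac:(rewrite sym; auto)) as [a1 [a2 [g1 [g2 [g3 [g4 g5]]]]]].
  destruct (cls X col H p2 o q2 ltac:(rewrite sym; auto)) as [b1 [b2 [h1 [h2 [h3 [h4 h5]]]]]].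
  destruct (cls X col H p3 o q3 ltac:(rewrite sym; auto)) as [c1 [c2 [i1 [i2 [i3 [i4 i5]]]]]].
  destruct (cls X col H p4 o q4 ltac:(rewrite sym; auto)) as [d1 [d2 [j1 [j2 [j3 [j4 j5]]]]]].
  assert (k1 : col o p1 <> cc) by congruence.
  assert (k2 : col o p2 <> cc) by congruence.
  assert (k3 : col o p3 <> cc) by congruence.
  assert (k4 : col o p4 <> cc) by congruence.
  assert (k12 : col p1 p2 <> cc) by (apply (bbc X col H o); auto).
  assert (k13 : col p1 p3 <> cc) by (apply (bbc X col H o); auto).
  assert (k14 : col p1 p4 <> cc) by (apply (bbc X col H o); auto).
  assert (k23 : col p2 p3 <> cc) by (apply (bbc X col H o); auto).
  assert (k24 : col p2 p4 <> cc) by (apply (bbc X col H o); auto).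
  assert (k34 : col p3 p4 <> cc) by (apply (bbc X col H o); auto).
  assert (r0 : inR X col o o) by (left; reflexivity).
  assert (r01 : inR X col o o1) by (right; auto).
  assert (r02 : inR X col o o2) by (right; auto).
  assert (r1 : inR X col p1 p1) by (left; reflexivity).
  assert (r11 : inR X col p1 a1) by (right; auto).
  assert (r12 : inR X col p1 a2) by (right; auto).
  assert (r2 : inR X col p2 p2) by (left; reflexivity).
  assert (r21 : inR X col p2 b1) by (right; auto).
  assert (r22 : inR X col p2 b2) by (right; auto).
  assert (r3 : inR X col p3 p3) by (left; reflexivity).
  assert (r31 : inR X col p3 c1) by (right; auto).
  assert (r32 : inR X col p3 c2) by (right; auto).
  assert (r4 : inR X col p4 p4) by (left; reflexivity).
  assert (r41 : inR X col p4 d1) by (right; auto).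
  assert (r42 : inR X col p4 d2) by (right; auto).
  exists [o; o1; o2; p1; a1; a2; p2; b1; b2; p3; c1; c2; p4; d1; d2].
  split; [reflexivity|].
  clear e1 e2 e3 e4 f4 f5 g4 g5 h4 h5 i4 i5 j4 j5.
  nd.
Qed.
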